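(* Let $R=R^\top\succ0$, $Q=Q^\top\succeq0$, $(A,B)$ controllable and $w^{(0)}=0$, i.e. $H^{(0)}=0$. Then iterating between the policy evaluation and the policy improvement steps yields $H^{(i)}\to H$, i.e. $w^{(i)}\to w^*$, as well as $L^{(i)}\to L^*$ as $i\to\infty$.
   Context: System $x_{j+1}=Ax_j+Bu_j$, $x_j\in\mathbb{R}^n$, $u_j\in\mathbb{R}^m$; one-step cost $c_j=\tfrac12\big((x_j-r_j)^\top Q(x_j-r_j)+u_j^\top Ru_j\big)$, discount $\gamma\in[0,1)$; at each time $k$ a reference $r_k,\dots,r_{k+N}\in\mathbb{R}^n$ is given on a moving horizon $N$, with $r_i=0$ for $i>k+N$. The target: minimize $J_k=\sum_{i=k}^\infty\gamma^{i-k}c_i$. The reference-dependent Q-function $Q_0$ (limit $K\to\infty$ of the finite-horizon function defined by ${}^{K}Q_K=c_{k+K}$, ${}^{K}Q_\kappa=c_{k+\kappa}+\gamma\,{}^{K}Q_{\kappa+1}|_{u^*_{k+\kappa+1}}$ with optimal subsequent controls) satisfies $Q_0=\tfrac12 z_k^\top Hz_k$, $z_k=[x_k^\top,u_k^\top,r_k^\top,\dots,r_{k+N}^\top]^\top$, for a structured symmetric matrix $H$ partitioned into blocks $h_{ab}$, $a,b\in\{x,u,r_0,\dots,r_N\}$; $L^*=L(H)$ is the optimal gain, where $L(H)=-h_{uu}^{-1}[h_{ux},h_{ur_1},\dots,h_{ur_N}]$ (and $L(0):=0$), so that $u_k^*=L^*[x_k^\top,r_{k+1}^\top,\dots,r_{k+N}^\top]^\top$.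 Let $\phi$ be the vector of $L$ quadratic basis functions $z_az_b$ ($a\ne b$), $\tfrac12z_a^2$ indexed by the non-redundant (not identically zero, upper-triangular) entries of $H$, and $v(\cdot)$ map such a symmetric matrix to the weight vector $w$ with $w^\top\phi(z)=\tfrac12 z^\top Hz$; $w^*=v(H)$ and $H^{(i)}$ is defined by $v(H^{(i)})=w^{(i)}$. Value iteration at fixed time $k$: using $M_s\ge L$ samples $z_j=[x_j^\top,u_j^\top,r_j^\top,\dots,r_{j+N}^\top]^\top$, $j=k-M_s+1,\dots,k$, with costs $c_j$, and $z^{*(i)}_{j+1}=[x_{j+1}^\top,(L^{(i)}[x_{j+1}^\top,r_{j+2}^\top,\dots,r_{j+N}^\top,0^\top]^\top)^\top,r_{j+1}^\top,\dots,r_{j+N}^\top,0^\top]^\top$, and $\Phi=[\phi(z_{k-M_s+1}),\dots,\phi(z_k)]^\top$ satisfying $\operatorname{rank}(\Phi^\top\Phi)=L$: policy evaluation $w^{(i+1)}=\arg\min_w\sum_j\big(c_j+\gamma(w^{(i)})^\top\phi(z^{*(i)}_{j+1})-w^\top\phi(z_j)\big)^2=(\Phi^\top\Phi)^{-1}\Phi^\top c$; policy improvement $L^{(i+1)}=L(H^{(i+1)})$; initialization $w^{(0)}=0$, $L^{(0)}=0$. *)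

(* Defs.v *)
From HB Require Import structures.
From mathcomp Require Import all_boot all_order all_algebra.
From mathcomp Require Import all_classical all_reals all_analysis.
Set Implicit Arguments. Unset Strict Implicit. Unset Printing Implicit Defensive.
Import Order.TTheory GRing.Theory Num.Theory numFieldNormedType.Exports.
Local Open Scope ring_scope.
Local Open Scope classical_set_scope.

Section LQT.
Variable R : realType.

Definition qform k (M : 'M[R]_k) (v : 'cV[R]_k) : R := (v^T *m M *m v) 0 0.

Definition posdef k (M : 'M[R]_k) : Prop :=
  M^T = M /\ forall v : 'cV[R]_k, v != 0 -> 0 < qform M v.
Definition possemidef k (M : 'M[R]_k) : Prop :=
  M^T = M /\ forall v : 'cV[R]_k, 0 <= qform M v.

Definition controllable n m (A : 'M[R]_n) (B : 'M[R]_(n, m)) : Prop :=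
  \rank (\mxrow_(i < n) (A ^+ i *m B)) = n.

Variables (n m N : nat).

(** dimension of z = [x; u; r_0; ...; r_N] *)
Definition zdim := (n + (m + N.+1 * n))%N.
(** dimension of the gain input [x; r_1; ...; r_N] *)
Definition ydim := (n + N * n)%N.

(** A reference block r_0..r_N is stored as the matrix whose i-th row is r_i^T *)
Definition zvec (x : 'cV[R]_n) (u : 'cV[R]_m) (rs : 'M[R]_(N.+1, n)) : 'cV[R]_zdim :=
  col_mx x (col_mx u (mxvec rs)^T).

Definition ytail (rs : 'M[R]_(N.+1, n)) : 'M[R]_(N, n) :=
  \matrix_(i < N, j < n) rs (lift ord0 i) j.

Definition yvec (x : 'cV[R]_n) (rs : 'M[R]_(N.+1, n)) : 'cV[R]_ydim :=
  col_mx x (mxvec (ytail rs))^T.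

Definition cost (Q : 'M[R]_n) (Rw : 'M[R]_m) (x : 'cV[R]_n) (u : 'cV[R]_m)
  (r : 'cV[R]_n) : R := 2^-1 * (qform Q (x - r) + qform Rw u).

Definition rshiftref (rs : 'M[R]_(N.+1, n)) : 'M[R]_(N.+1, n) :=
  \matrix_(i < N.+1, j < n) (if (i < N)%N then rs (inord i.+1) j else 0).

Fixpoint Qfin (A : 'M[R]_n) (B : 'M[R]_(n, m)) (Q : 'M[R]_n) (Rw : 'M[R]_m)
  (gamma : R) (K : nat) (x : 'cV[R]_n) (u : 'cV[R]_m) (rs : 'M[R]_(N.+1, n)) : R :=
  match K with
  | 0 => cost Q Rw x u (row 0 rs)^T
  | K'.+1 => cost Q Rw x u (row 0 rs)^T +
      gamma * inf (range (fun u' : 'cV[R]_m =>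
                     Qfin A B Q Rw gamma K' (A *m x + B *m u) u' (rshiftref rs)))
  end.

(** block labels of the entries of z: 0 = x, 1 = u, i.+2 = r_i *)
Definition idx_pair (c : 'I_(N.+1 * n)) : 'I_N.+1 * 'I_n :=
  enum_val (cast_ord (esym (mxvec_cast _ _)) c).

Definition blk (p : 'I_zdim) : nat :=
  match fintype.split p with
  | inl _ => 0%N
  | inr p' => match fintype.split p' with
              | inl _ => 1%N
              | inr p'' => ((idx_pair p'').1).+2
              end
  end.

(** structurally (identically) zero blocks of H: h_{u r_0} and h_{r_0 r_i}, i >= 1 *)
Definition zero_blk (a b : nat) : bool :=
  ((a == 1%N) && (b == 2%N)) || ((a == 2%N) && (b == 1%N)) ||
  ((a == 2%N) && (2 < b)%N) || ((b == 2%N) && (2 < a)%N).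

Definition nonred (p q : 'I_zdim) : bool :=
  (p <= q)%N && ~~ zero_blk (blk p) (blk q).

Definition pairs : seq ('I_zdim * 'I_zdim) :=
  [seq pq <- enum {: 'I_zdim * 'I_zdim} | nonred pq.1 pq.2].

Definition nL := size pairs.
Definition tpairs : nL.-tuple ('I_zdim * 'I_zdim) := in_tuple pairs.

Definition phi (z : 'cV[R]_zdim) : 'cV[R]_nL :=
  \col_(k < nL) let pq := tnth tpairs k in
     if pq.1 == pq.2 then 2^-1 * z pq.1 0 ^+ 2 else z pq.1 0 * z pq.2 0.

(** v(H): weight vector with w^T phi(z) = 1/2 z^T H z *)
Definition vmap (H : 'M[R]_zdim) : 'cV[R]_nL :=
  \col_(k < nL) H (tnth tpairs k).1 (tnth tpairs k).2.

Definition Hof (w : 'cV[R]_nL) : 'M[R]_zdim :=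
  \matrix_(p, q) \sum_(k < nL | (tnth tpairs k == (p, q)) || (tnth tpairs k == (q, p)))
                    w k 0.

Definition ix (b : 'I_n) : 'I_zdim := lshift (m + N.+1 * n) b.
Definition iu (a : 'I_m) : 'I_zdim := rshift n (lshift (N.+1 * n) a).
Definition ir (i : 'I_N.+1) (j : 'I_n) : 'I_zdim :=
  rshift n (rshift m (mxvec_index i j)).

Definition idx_tail (c : 'I_(N * n)) : 'I_N * 'I_n :=
  enum_val (cast_ord (esym (mxvec_cast _ _)) c).

Definition huy (H : 'M[R]_zdim) : 'M[R]_(m, ydim) :=
  \matrix_(a < m, c < ydim)
    match fintype.split c with
    | inl b => H (iu a) (ix b)
    | inr c' => H (iu a) (ir (lift ord0 (idx_tail c').1) (idx_tail c').2)
    end.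

Definition huu (H : 'M[R]_zdim) : 'M[R]_m := \matrix_(a, b) H (iu a) (iu b).

Definition gain (H : 'M[R]_zdim) : 'M[R]_(m, ydim) :=
  if H == 0 then 0 else - (invmx (huu H) *m huy H).

(** data: states x_j, inputs u_j, references r_t; samples j = 0..Ms-1
   (relative indexing of j = k-Ms+1..k). Reference window known at time j:
   r_t for t <= j + N, and 0 beyond. *)
Definition refs_at (r : nat -> 'cV[R]_n) (j t : nat) : 'M[R]_(N.+1, n) :=
  \matrix_(i < N.+1, c < n) (if (t + i <= j + N)%N then r (t + i)%N c 0 else 0).

Definition zsample (x : nat -> 'cV[R]_n) (u : nat -> 'cV[R]_m)
  (r : nat -> 'cV[R]_n) (j : nat) : 'cV[R]_zdim :=
  zvec (x j) (u j) (refs_at r j j).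

Definition zstar (x : nat -> 'cV[R]_n) (r : nat -> 'cV[R]_n)
  (Lg : 'M[R]_(m, ydim)) (j : nat) : 'cV[R]_zdim :=
  let rs := refs_at r j j.+1 in zvec (x j.+1) (Lg *m yvec (x j.+1) rs) rs.

Definition Phi Ms (x : nat -> 'cV[R]_n) (u : nat -> 'cV[R]_m)
  (r : nat -> 'cV[R]_n) : 'M[R]_(Ms, nL) :=
  \matrix_(j < Ms, k < nL) phi (zsample x u r j) k 0.

Definition vi_step Ms (Q : 'M[R]_n) (Rw : 'M[R]_m) (gamma : R)
  (x : nat -> 'cV[R]_n) (u : nat -> 'cV[R]_m) (r : nat -> 'cV[R]_n)
  (w : 'cV[R]_nL) : 'cV[R]_nL :=
  let Ph := Phi Ms x u r in
  let Lg := gain (Hof w) in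
  let target := \col_(j < Ms)
     (cost Q Rw (x j) (u j) (r j) + gamma * (w^T *m phi (zstar x r Lg j)) 0 0) in
  invmx (Ph^T *m Ph) *m Ph^T *m target.

Fixpoint w_iter Ms Q Rw gamma x u r (i : nat) : 'cV[R]_nL :=
  match i with
  | 0 => 0
  | i'.+1 => vi_step Ms Q Rw gamma x u r (w_iter Ms Q Rw gamma x u r i')
  end.

End LQT.

(* Main.v *)
Require Import Defs.
From HB Require Import structures.
From mathcomp Require Import all_boot all_order all_algebra.
From mathcomp Require Import all_classical all_reals all_analysis.
From mathcomp Require Import ring lra zify.
Import Order.TTheory GRing.Theory Num.Theory numFieldNormedType.Exports.
Set Implicit Arguments. Unset Strict Implicit. Unset Printing Implicit Defensive.
Local Open Scope ring_scope.
Local Open Scope classical_set_scope.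

Section P1.
Variables (R : realType) (n m N : nat).
Local Notation zd := (zdim n m N).
Local Notation yd := (ydim n N).

Lemma sum_mxvec (k l : nat) (F : 'I_(k * l) -> R) :
  \sum_(c < k * l) F c = \sum_(i < k) \sum_(j < l) F (mxvec_index i j).
Proof.
rewrite pair_bigA /= (reindex (uncurry (@mxvec_index k l))) /=; last first.
  exact: curry_mxvec_bij.
by apply: eq_bigr => -[i j].
Qed.

Lemma sumZ (F : 'I_zd -> R) :
  \sum_p F p = \sum_b F (ix m N b) + (\sum_a F (iu n N a)
     + \sum_i \sum_j F (ir m i j)).
Proof.
rewrite /zdim big_split_ord /=; congr (_ + _).
rewrite big_split_ord /=; congr (_ + _).
by rewrite sum_mxvec.
Qed.

Lemma sumY (F : 'I_yd -> R) :
  \sum_c F c = \sum_b F (lshift (N * n) b) +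
     \sum_(i < N) \sum_(j < n) F (rshift n (mxvec_index i j)).
Proof.
rewrite /ydim big_split_ord /=; congr (_ + _).
by rewrite sum_mxvec.
Qed.

Lemma zvec_ix (x : 'cV[R]_n) u (rs : 'M[R]_(N.+1, n)) b : zvec x u rs (ix m N b) 0 = x b 0.
Proof. by rewrite /zvec /ix col_mxEu. Qed.
Lemma zvec_iu (x : 'cV[R]_n) (u : 'cV[R]_m) (rs : 'M[R]_(N.+1, n)) a : zvec x u rs (iu n N a) 0 = u a 0.
Proof. by rewrite /zvec /iu col_mxEd col_mxEu. Qed.
Lemma zvec_ir (x : 'cV[R]_n) (u : 'cV[R]_m) (rs : 'M[R]_(N.+1, n)) i j : zvec x u rs (ir m i j) 0 = rs i j.
Proof. by rewrite /zvec /ir !col_mxEd mxE mxvecE. Qed.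

Lemma yvec_l (x : 'cV[R]_n) (rs : 'M[R]_(N.+1, n)) b : yvec x rs (lshift (N * n) b) 0 = x b 0.
Proof. by rewrite /yvec col_mxEu. Qed.
Lemma yvec_r (x : 'cV[R]_n) (rs : 'M[R]_(N.+1, n)) i j :
  yvec x rs (rshift n (mxvec_index i j)) 0 = rs (lift ord0 i) j.
Proof. by rewrite /yvec col_mxEd mxE mxvecE mxE. Qed.

Lemma idx_pairK (i : 'I_N.+1) (j : 'I_n) : idx_pair (mxvec_index i j) = (i, j).
Proof. by rewrite /idx_pair /mxvec_index cast_ordK enum_rankK. Qed.
Lemma idx_tailK (i : 'I_N) (j : 'I_n) : idx_tail (mxvec_index i j) = (i, j).
Proof. by rewrite /idx_tail /mxvec_index cast_ordK enum_rankK. Qed.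

Lemma blk_ix (b : 'I_n) : blk (ix m N b) = 0%N.
Proof. by rewrite /blk /ix (unsplitK (inl _ : 'I_n + 'I_(m + N.+1 * n))). Qed.
Lemma blk_iu (a : 'I_m) : blk (iu n N a) = 1%N.
Proof.
rewrite /blk /iu (unsplitK (inr _ : 'I_n + 'I_(m + N.+1 * n))).
by rewrite (unsplitK (inl _ : 'I_m + 'I_(N.+1 * n))).
Qed.
Lemma blk_ir (i : 'I_N.+1) (j : 'I_n) : blk (ir m i j) = i.+2.
Proof.
rewrite /blk /ir (unsplitK (inr _ : 'I_n + 'I_(m + N.+1 * n))).
by rewrite (unsplitK (inr _ : 'I_m + 'I_(N.+1 * n))) idx_pairK.
Qed.

Lemma huy_l (S : 'M[R]_zd) a b : huy S a (lshift (N * n) b) = S (iu n N a) (ix m N b).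
Proof. by rewrite /huy mxE (unsplitK (inl _ : 'I_n + 'I_(N * n))). Qed.
Lemma huy_r (S : 'M[R]_zd) a i j :
  huy S a (rshift n (mxvec_index i j)) = S (iu n N a) (ir m (lift ord0 i) j).
Proof. by rewrite /huy mxE (unsplitK (inr _ : 'I_n + 'I_(N * n))) idx_tailK. Qed.

Lemma idx_cases (p : 'I_zd) :
  [\/ exists b, p = ix m N b, exists a, p = iu n N a | exists i j, p = ir m i j].
Proof.
rewrite -[p](splitK) /=; case: (fintype.split p) => [b|p'] /=.
  by apply: Or31; exists b.
rewrite -[p'](splitK) /=; case: (fintype.split p') => [a|c] /=.
  by apply: Or32; exists a.
apply: Or33; case: (mxvec_indexP c) => i j; by exists i, j.
Qed.

End P1.

Section Q.
Variables (R : realType).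

Definition evc k (p : 'I_k) : 'cV[R]_k := delta_mx p 0.

Lemma addE k l (A B : 'M[R]_(k, l)) i j : (A + B) i j = A i j + B i j.
Proof. by rewrite mxE. Qed.

Lemma qformE k (G : 'M[R]_k) z :
  qform G z = \sum_p \sum_q z p 0 * G p q * z q 0.
Proof.
rewrite /qform mxE exchange_big /=; apply: eq_bigr => q _.
rewrite mxE big_distrl /=; apply: eq_bigr => p _; by rewrite mxE.
Qed.

Lemma qformDm k (A B : 'M[R]_k) v : qform (A + B) v = qform A v + qform B v.
Proof. by rewrite /qform mulmxDr mulmxDl mxE. Qed.
Lemma qformZm k c (A : 'M[R]_k) v : qform (c *: A) v = c * qform A v.
Proof. by rewrite /qform -scalemxAr -scalemxAl mxE. Qed.
Lemma qform0m k (v : 'cV[R]_k) : qform 0 v = 0.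
Proof. by rewrite /qform mulmx0 mul0mx mxE. Qed.
Lemma qform0v k (A : 'M[R]_k) : qform A 0 = 0.
Proof. by rewrite /qform mulmx0 mxE. Qed.
Lemma qform_mul k l (G : 'M[R]_k) (P : 'M[R]_(k, l)) z :
  qform G (P *m z) = qform (P^T *m G *m P) z.
Proof. by rewrite /qform trmx_mul !mulmxA. Qed.

Lemma bil_sym k (S : 'M[R]_k) (a b : 'cV[R]_k) : S^T = S ->
  (a^T *m S *m b) 0 0 = (b^T *m S *m a) 0 0.
Proof.
move=> sS.
have -> : (a^T *m S *m b) 0 0 = ((a^T *m S *m b)^T) 0 0 by rewrite [RHS]mxE.
by rewrite !trmx_mul trmxK sS mulmxA.
Qed.

Lemma qformDv k (S : 'M[R]_k) (a b : 'cV[R]_k) : S^T = S ->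
  qform S (a + b) = qform S a + 2 * (b^T *m S *m a) 0 0 + qform S b.
Proof.
move=> sS; rewrite /qform !linearD /= ?mulmxDl ?mulmxDr !addE.
rewrite (bil_sym a b sS); lra.
Qed.

Lemma qform_delta k (S : 'M[R]_k) (p q : 'I_k) :
  ((evc q)^T *m S *m evc p) 0 0 = S q p.
Proof.
by rewrite /evc trmx_delta -mulmxA -colE -rowE mxE mxE.
Qed.

Lemma polar k (S : 'M[R]_k) (p q : 'I_k) : S^T = S ->
  S p q = 2^-1 * (qform S (evc p + evc q) - qform S (evc p) - qform S (evc q)).
Proof.
move=> sS; rewrite qformDv // qform_delta.
suff -> : S q p = S p q by lra.
by rewrite -[in LHS]sS mxE.
Qed.

End Q.

Section P2.
Variables (R : realType) (n m N : nat).
Local Notation zd := (zdim n m N).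
Local Notation yd := (ydim n N).

Definition structured (G : 'M[R]_zd) :=
  forall p q, zero_blk (blk p) (blk q) -> G p q = 0.

Lemma zero_blkC a b : zero_blk a b = zero_blk b a.
Proof. by rewrite /zero_blk; case: a => [|[|[|a]]]; case: b => [|[|[|b]]]. Qed.

Lemma tpairs_nonred k : nonred (tnth (tpairs n m N) k).1 (tnth (tpairs n m N) k).2.
Proof.
have := mem_tnth k (tpairs n m N); rewrite /tpairs /= mem_filter.
by case/andP.
Qed.

Lemma uniq_pairs : uniq (pairs n m N).
Proof. by rewrite /pairs filter_uniq // enum_uniq. Qed.

Lemma tpairs_inj : injective (tnth (tpairs n m N)).
Proof. apply/tuple_uniqP; exact: uniq_pairs. Qed.

Lemma Hof_sym (w : 'cV[R]_(nL n m N)) : (Hof w)^T = Hof w.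
Proof.
apply/matrixP => p q; rewrite !mxE; apply: eq_bigl => k; by rewrite orbC.
Qed.

Lemma Hof_struct (w : 'cV[R]_(nL n m N)) : structured (Hof w).
Proof.
move=> p q zb; rewrite mxE big_pred0 // => k.
have := tpairs_nonred k; rewrite /nonred.
case: (tnth _ k) => a b /=; apply: contraTF => /orP[] /eqP [-> ->].
  by rewrite zb andbF.
by rewrite zero_blkC zb andbF.
Qed.

Lemma vmap_Hof (w : 'cV[R]_(nL n m N)) : vmap (Hof w) = w.
Proof.
apply/matrixP => k j; rewrite (ord1 j) !mxE.
rewrite (eq_bigl (fun k' => k' == k)) ?big_pred1_eq // => k'.
case: (eqVneq k' k) => [->|nk]; first by rewrite -surjective_pairing eqxx.
apply/negbTE; apply/norP; split.
  by apply: contra nk => /eqP h; apply/eqP/tpairs_inj; rewrite h -surjective_pairing.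
have := tpairs_nonred k'; have := tpairs_nonred k.
rewrite /nonred; case E: (tnth _ k) => [a b]; case E': (tnth _ k') => [c d] /=.
case/andP => ab _; case/andP => cd _; apply/negP => /eqP [ec ed].
subst c d.
have eab : a = b by apply/val_inj/eqP; rewrite eqn_leq ab cd.
subst b; move/eqP: nk; apply; apply: tpairs_inj; by rewrite E E'.
Qed.

Lemma rep (G : 'M[R]_zd) (z : 'cV[R]_zd) : G^T = G -> structured G ->
  ((vmap G)^T *m phi z) 0 0 = 2^-1 * qform G z.
Proof.
move=> sG stG.
set a := fun p q => z p 0 * G p q * z q 0.
have asym : forall p q, a p q = a q p.
  move=> p q; rewrite /a.
  have -> : G p q = G q p by rewrite -[in LHS]sG mxE.
  ring.
rewrite qformE -/a mxE.
under eq_bigr => k _ do rewrite !mxE.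
pose F (pq : 'I_zd * 'I_zd) := G pq.1 pq.2 *
  (if pq.1 == pq.2 then 2^-1 * z pq.1 0 ^+ 2 else z pq.1 0 * z pq.2 0).
rewrite (eq_bigr (fun k => F (tnth (tpairs n m N) k))) //.
rewrite -(big_tuple 0 +%R (tpairs n m N) xpredT F) /= big_filter.
have E0 : \sum_(i <- enum {: 'I_zd * 'I_zd} | nonred i.1 i.2) F i =
    \sum_p \sum_(q | nonred p q) F (p, q).
  rewrite pair_big_dep /= big_enum_cond.
  by apply: eq_big => [[p q]|[p q] _] //=.
rewrite E0.
have E1 : \sum_p \sum_(q | nonred p q) F (p, q) =
   \sum_(p : 'I_zd) \sum_(q : 'I_zd) ((if (p < q)%N then a p q else 0) + 2^-1 * (if p == q then a p q else 0)).
  apply: eq_bigr => p _; rewrite big_mkcond /=; apply: eq_bigr => q _.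
  rewrite /nonred /F /a /=.
  case: (ltngtP p q) => [lpq|lqp|epq].
  - have -> : (p == q) = false by apply/negbTE; rewrite neq_ltn lpq.
    case: (boolP (zero_blk _ _)) => zb /=; [rewrite stG // |]; ring.
  - have -> : (p == q) = false by apply/negbTE; rewrite neq_ltn lqp orbT.
    rewrite /=; ring.
  - have pq : p = q by apply/val_inj.
    subst q; rewrite eqxx /=.
    case: (boolP (zero_blk _ _)) => zb /=; [rewrite stG // |]; ring.
rewrite E1.
set S1 := \sum_(p : 'I_zd) \sum_(q : 'I_zd) (if (p < q)%N then a p q else 0).
set S3 := \sum_(p : 'I_zd) \sum_(q : 'I_zd) (if p == q then a p q else 0).
have -> : \sum_(p : 'I_zd) \sum_(q : 'I_zd) ((if (p < q)%N then a p q else 0)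
     + 2^-1 * (if p == q then a p q else 0)) = S1 + 2^-1 * S3.
  rewrite /S1 /S3 big_distrr -big_split /=; apply: eq_bigr => p _.
  by rewrite big_distrr -big_split.
have E2 : \sum_(p : 'I_zd) \sum_(q : 'I_zd) a p q = \sum_(p : 'I_zd) \sum_(q : 'I_zd) (if (p < q)%N then a p q else 0)
   + \sum_(p : 'I_zd) \sum_(q : 'I_zd) (if (q < p)%N then a p q else 0)
   + \sum_(p : 'I_zd) \sum_(q : 'I_zd) (if p == q then a p q else 0).
  rewrite -!big_split; apply: eq_bigr => p _; rewrite -!big_split; apply: eq_bigr => q _ /=.
  case: (ltngtP p q) => [lpq|lqp|epq].
  - have -> : (p == q) = false by apply/negbTE; rewrite neq_ltn lpq.
    by rewrite !addr0.
  - have -> : (p == q) = false by apply/negbTE; rewrite neq_ltn lqp orbT.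
    by rewrite add0r addr0.
  - have pq : p = q by apply/val_inj.
    by subst q; rewrite eqxx !add0r.
have E3 : \sum_(p : 'I_zd) \sum_(q : 'I_zd) (if (q < p)%N then a p q else 0) =
          \sum_(p : 'I_zd) \sum_(q : 'I_zd) (if (p < q)%N then a p q else 0).
  rewrite exchange_big; apply: eq_bigr => p _; apply: eq_bigr => q _.
  by rewrite asym.
rewrite E2 E3 -/S1 -/S3; lra.
Qed.

Lemma rep_w (w : 'cV[R]_(nL n m N)) z :
  ((w^T *m phi z) 0 0) = 2^-1 * qform (Hof w) z.
Proof. by rewrite -rep ?vmap_Hof //; [exact: Hof_sym | exact: Hof_struct]. Qed.

End P2.

Section Lin.
Variable R : realType.

Definition islin k l (f : 'cV[R]_k -> 'cV[R]_l) :=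
  forall a z1 z2, f (a *: z1 + z2) = a *: f z1 + f z2.

Definition linmx k l (f : 'cV[R]_k -> 'cV[R]_l) : 'M[R]_(l, k) :=
  \matrix_(i, j) f (evc R j) i 0.

Lemma islin0 k l (f : 'cV[R]_k -> 'cV[R]_l) : islin f -> f 0 = 0.
Proof.
move=> lf; have h := lf 1 0 0; rewrite scaler0 addr0 scale1r in h.
have := congr1 (fun v => v - f 0) h; rewrite /= subrr addrK => e.
by rewrite -e.
Qed.

Lemma linmxP k l (f : 'cV[R]_k -> 'cV[R]_l) : islin f -> forall z, f z = linmx f *m z.
Proof.
move=> lf z.
have ez : z = \sum_(j < k) z j 0 *: evc R j.
  rewrite [LHS]matrix_sum_delta; apply: eq_bigr => j _; by rewrite big_ord1.
have -> : f z = \sum_(j < k) z j 0 *: f (evc R j).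
  rewrite [in LHS]ez; apply: (big_rec2 (fun y1 y2 => f y1 = y2)).
    exact: islin0.
  by move=> j y1 y2 _ <-; rewrite lf.
apply/matrixP => i c; rewrite (ord1 c) summxE !mxE; apply: eq_bigr => j _.
by rewrite !mxE mulrC.
Qed.

Lemma scaleE k l (c : R) (A : 'M[R]_(k, l)) i j : (c *: A) i j = c * A i j.
Proof. by rewrite mxE. Qed.

Lemma sandwich0 k l (f : 'cV[R]_k -> 'cV[R]_l) (G : 'M[R]_l) p q :
  islin f -> f (evc R p) = 0 \/ f (evc R q) = 0 ->
  ((linmx f)^T *m G *m linmx f) p q = 0.
Proof.
move=> lf h; rewrite -qform_delta !mulmxA -trmx_mul -!mulmxA -!linmxP //.
by case: h => ->; rewrite ?trmx0 ?mul0mx ?mulmx0 mxE.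
Qed.

End Lin.

Section P3.
Variables (R : realType) (n m N : nat).
Variables (A : 'M[R]_n) (B : 'M[R]_(n, m)) (Q : 'M[R]_n) (Rw : 'M[R]_m) (gamma : R).
Local Notation zd := (zdim n m N).
Local Notation yd := (ydim n N).

Definition zx (z : 'cV[R]_zd) : 'cV[R]_n := usubmx z.
Definition zu (z : 'cV[R]_zd) : 'cV[R]_m := usubmx (dsubmx z).
Definition zr (z : 'cV[R]_zd) : 'M[R]_(N.+1, n) := vec_mx (dsubmx (dsubmx z))^T.

Lemma zvecK z : zvec (zx z) (zu z) (zr z) = z.
Proof. by rewrite /zvec /zx /zu /zr vec_mxK trmxK !vsubmxK. Qed.
Lemma zx_zvec x u rs : zx (zvec x u rs) = x.
Proof. by rewrite /zx /zvec col_mxKu. Qed.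
Lemma zu_zvec x u rs : zu (zvec x u rs) = u.
Proof. by rewrite /zu /zvec col_mxKd col_mxKu. Qed.
Lemma zr_zvec x u rs : zr (zvec x u rs) = rs.
Proof. by rewrite /zr /zvec !col_mxKd trmxK mxvecK. Qed.

Lemma zxE z b : zx z b 0 = z (ix m N b) 0.
Proof. by rewrite -{2}(zvecK z) zvec_ix. Qed.
Lemma zuE z a : zu z a 0 = z (iu n N a) 0.
Proof. by rewrite -{2}(zvecK z) zvec_iu. Qed.
Lemma zrE z i j : zr z i j = z (ir m i j) 0.
Proof. by rewrite -{2}(zvecK z) zvec_ir. Qed.

Lemma zvecD a x1 u1 r1 x2 u2 r2 :
  zvec (a *: x1 + x2) (a *: u1 + u2) (a *: r1 + r2) =
  a *: zvec x1 u1 r1 + zvec x2 u2 r2 :> 'cV[R]_zd.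
Proof. by rewrite /zvec !linearP /= !scale_col_mx !add_col_mx. Qed.

Lemma ytailD a (r1 r2 : 'M[R]_(N.+1, n)) : ytail (a *: r1 + r2) = a *: ytail r1 + ytail r2.
Proof. by apply/matrixP => i j; rewrite !mxE. Qed.

Lemma yvecD a x1 r1 x2 r2 :
  yvec (a *: x1 + x2) (a *: r1 + r2) = a *: yvec x1 r1 + yvec x2 r2 :> 'cV[R]_yd.
Proof. by rewrite /yvec ytailD !linearP /= scale_col_mx add_col_mx. Qed.

Lemma rshiftrefD a (r1 r2 : 'M[R]_(N.+1, n)) :
  rshiftref (a *: r1 + r2) = a *: rshiftref r1 + rshiftref r2.
Proof.
apply/matrixP => i j; rewrite !mxE; case: ifP => _ //.
by rewrite mulr0 addr0.
Qed.

Lemma zxD a z1 z2 : zx (a *: z1 + z2) = a *: zx z1 + zx z2.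
Proof. by rewrite /zx linearP. Qed.
Lemma zuD a z1 z2 : zu (a *: z1 + z2) = a *: zu z1 + zu z2.
Proof. by rewrite /zu !linearP. Qed.
Lemma zrD a z1 z2 : zr (a *: z1 + z2) = a *: zr z1 + zr z2.
Proof. by rewrite /zr !linearP. Qed.

Definition P1f (z : 'cV[R]_zd) : 'cV[R]_n := zx z - (row 0 (zr z))^T.
Definition P2f (z : 'cV[R]_zd) : 'cV[R]_m := zu z.
Definition Mf (S : 'M[R]_zd) (z : 'cV[R]_zd) : 'cV[R]_zd :=
  let x' := A *m zx z + B *m zu z in
  let rs' := rshiftref (zr z) in
  zvec x' (gain S *m yvec x' rs') rs'.

Lemma P1f_lin : islin P1f.
Proof.
move=> a z1 z2; rewrite /P1f zxD zrD.
have -> : row 0 (a *: zr z1 + zr z2) = a *: row 0 (zr z1) + row 0 (zr z2).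
  by apply/matrixP => i j; rewrite !mxE.
by rewrite linearD linearZ /= scalerBr opprD addrACA.
Qed.

Lemma P2f_lin : islin P2f.
Proof. exact: zuD. Qed.

Lemma Mf_lin S : islin (Mf S).
Proof.
move=> a z1 z2; rewrite /Mf zxD zuD zrD rshiftrefD.
have -> : A *m (a *: zx z1 + zx z2) + B *m (a *: zu z1 + zu z2) =
   a *: (A *m zx z1 + B *m zu z1) + (A *m zx z2 + B *m zu z2).
  rewrite !mulmxDr -!scalemxAr scalerDr; by rewrite addrACA.
by rewrite yvecD mulmxDr -scalemxAr zvecD.
Qed.

End P3.

Section P4.
Variables (R : realType) (n m N : nat).
Variables (A : 'M[R]_n) (B : 'M[R]_(n, m)) (Q : 'M[R]_n) (Rw : 'M[R]_m) (gamma : R).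
Local Notation zd := (zdim n m N).
Local Notation yd := (ydim n N).
Local Notation ev := (@evc R zd).

Lemma ir_inj (i i' : 'I_N.+1) (j j' : 'I_n) : ir m i j = ir m i' j' -> i = i' /\ j = j'.
Proof.
rewrite /ir => h; have h1 := rshift_inj h; have h2 := rshift_inj h1.
have := congr1 (@idx_pair n N) h2.
by rewrite !idx_pairK => -[-> ->].
Qed.

Lemma ix_ir (b : 'I_n) (i : 'I_N.+1) (j : 'I_n) : (ix m N b == ir m i j) = false.
Proof. apply/negbTE/eqP => /(congr1 val) /=; have := ltn_ord b; lia. Qed.
Lemma iu_ir (a : 'I_m) (i : 'I_N.+1) (j : 'I_n) : (iu n N a == ir m i j) = false.
Proof.
apply/negbTE/eqP => /(congr1 val) /=; have := ltn_ord a; lia.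
Qed.
Lemma ix_iu (a : 'I_m) (b : 'I_n) : (ix m N b == iu n N a) = false.
Proof. apply/negbTE/eqP => /(congr1 val) /=; have := ltn_ord b; lia. Qed.
Lemma ir_eq (i : 'I_N.+1) (j : 'I_n) (i' : 'I_N.+1) (j' : 'I_n) : (ir m i j == ir m i' j') = (i == i') && (j == j').
Proof.
apply/eqP/andP => [/ir_inj [-> ->] //| [/eqP -> /eqP ->] //].
Qed.

Lemma evE (p q : 'I_zd) : ev p q 0 = (q == p)%:R.
Proof. by rewrite /evc mxE andbT. Qed.

Lemma zx_ev_ir (i : 'I_N.+1) (j : 'I_n) : zx (ev (ir m i j)) = 0.
Proof. apply/matrixP => b c; rewrite (ord1 c) zxE evE ix_ir mxE //. Qed.
Lemma zu_ev_ir (i : 'I_N.+1) (j : 'I_n) : zu (ev (ir m i j)) = 0.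
Proof. apply/matrixP => b c; rewrite (ord1 c) zuE evE iu_ir mxE //. Qed.
Lemma zx_ev_iu (a : 'I_m) : zx (ev (iu n N a)) = 0.
Proof. apply/matrixP => b c; rewrite (ord1 c) zxE evE ix_iu mxE //. Qed.
Lemma zr_ev_iu (a : 'I_m) : zr (ev (iu n N a)) = 0.
Proof. apply/matrixP => i j; rewrite zrE evE eq_sym iu_ir mxE //. Qed.

Lemma zvec000 : zvec 0 0 0 = 0 :> 'cV[R]_zd.
Proof. by rewrite /zvec linear0 trmx0 !col_mx0. Qed.
Lemma yvec00 : yvec 0 0 = 0 :> 'cV[R]_yd.
Proof.
rewrite /yvec.
have -> : ytail (0 : 'M[R]_(N.+1, n)) = 0 by apply/matrixP => i j; rewrite !mxE.
by rewrite linear0 trmx0 col_mx0.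
Qed.

Lemma Mf_ev_ir0 S (j : 'I_n) : Mf A B S (ev (ir m ord0 j)) = 0.
Proof.
rewrite /Mf.
have -> : rshiftref (zr (ev (ir m ord0 j))) = 0.
  apply/matrixP => i c; rewrite /rshiftref [LHS]mxE [RHS]mxE; case: ifP => // hi.
  rewrite zrE evE ir_eq; case: eqP => //= h.
  by have := congr1 val h; rewrite /= inordK //; lia.
by rewrite zx_ev_ir zu_ev_ir !mulmx0 addr0 yvec00 mulmx0 zvec000.
Qed.

Lemma P2f_ev_ir0 (j : 'I_n) : P2f (ev (ir m ord0 j)) = 0.
Proof. exact: zu_ev_ir. Qed.

Lemma P1f_ev_iu (a : 'I_m) : P1f (ev (iu n N a)) = 0.
Proof.
rewrite /P1f zx_ev_iu zr_ev_iu.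
have -> : row 0 (0 : 'M[R]_(N.+1, n)) = 0 by apply/matrixP => i j; rewrite !mxE.
by rewrite trmx0 subr0.
Qed.

Lemma P1f_ev_ir (i : 'I_N.+1) (j : 'I_n) : i != ord0 -> P1f (ev (ir m i j)) = 0.
Proof.
move=> hi; rewrite /P1f zx_ev_ir.
have -> : row 0 (zr (ev (ir m i j))) = 0.
  apply/matrixP => a c; rewrite [LHS]mxE [RHS]mxE zrE evE ir_eq.
  by case: eqP => //= h; move: hi; rewrite -h eqxx.
by rewrite trmx0 subr0.
Qed.

Lemma zb0l b : zero_blk 0 b = false.
Proof. by rewrite /zero_blk; case: b => [|[|[|b]]]. Qed.
Lemma zb0r b : zero_blk b 0 = false.
Proof. by rewrite /zero_blk; case: b => [|[|[|b]]]. Qed.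
Lemma zb11 : zero_blk 1 1 = false.
Proof. by []. Qed.
Lemma zb1r i : zero_blk 1 i.+2 = (i == 0)%N.
Proof. by rewrite /zero_blk; case: i => [|i]. Qed.
Lemma zbr1 i : zero_blk i.+2 1 = (i == 0)%N.
Proof. by rewrite /zero_blk; case: i => [|i]. Qed.
Lemma zbrr i i' : zero_blk i.+2 i'.+2 = ((i == 0) && (0 < i'))%N || ((i' == 0) && (0 < i))%N.
Proof. by rewrite /zero_blk; case: i => [|i]; case: i' => [|i']. Qed.

Lemma zb_cases (p q : 'I_zd) : zero_blk (blk p) (blk q) ->
  ((exists j, p = ir m ord0 j) /\ P1f (ev q) = 0) \/
  ((exists j, q = ir m ord0 j) /\ P1f (ev p) = 0).
Proof.
case: (idx_cases p) => [[b ->]|[a ->]|[i [j ->]]];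
case: (idx_cases q) => [[b' ->]|[a' ->]|[i' [j' ->]]];
rewrite ?blk_ix ?blk_iu ?blk_ir ?zb0l ?zb0r ?zb11 ?zb1r ?zbr1 ?zbrr //.
- move=> /eqP hi'; right; split; last exact: P1f_ev_iu.
  by exists j'; congr ir; apply/val_inj.
- move=> /eqP hi; left; split; last exact: P1f_ev_iu.
  by exists j; congr ir; apply/val_inj.
- case/orP => /andP [/eqP h1 h2].
    left; split; first by exists j; congr ir; apply/val_inj.
    by apply: P1f_ev_ir; rewrite -lt0n.
  right; split; first by exists j'; congr ir; apply/val_inj.
  by apply: P1f_ev_ir; rewrite -lt0n.
Qed.

Definition Gmat (S : 'M[R]_zd) : 'M[R]_zd :=
  (linmx (@P1f R n m N))^T *m Q *m linmx (@P1f R n m N) + (linmx (@P2f R n m N))^T *m Rw *m linmx (@P2f R n m N)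
  + gamma *: ((linmx (Mf A B S))^T *m S *m linmx (Mf A B S)).

Lemma Gmat_struct S : structured (Gmat S).
Proof.
move=> p q zb; rewrite /Gmat !addE scaleE.
case: (zb_cases zb) => [[[j ->] h]|[[j ->] h]].
  rewrite (sandwich0 (f:=@P1f R n m N) Q (@P1f_lin R n m N) (or_intror h)).
  rewrite (sandwich0 (f:=@P2f R n m N) Rw (@P2f_lin R n m N) (or_introl (P2f_ev_ir0 j))).
  rewrite (sandwich0 (f:=Mf A B S) S (Mf_lin A B S) (or_introl (Mf_ev_ir0 S j))).
  by rewrite mulr0 !addr0.
rewrite (sandwich0 (f:=@P1f R n m N) Q (@P1f_lin R n m N) (or_introl h)).
rewrite (sandwich0 (f:=@P2f R n m N) Rw (@P2f_lin R n m N) (or_intror (P2f_ev_ir0 j))).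
rewrite (sandwich0 (f:=Mf A B S) S (Mf_lin A B S) (or_intror (Mf_ev_ir0 S j))).
by rewrite mulr0 !addr0.
Qed.

Lemma Gmat_sym S : Q^T = Q -> Rw^T = Rw -> S^T = S -> (Gmat S)^T = Gmat S.
Proof.
move=> sQ sR sS; rewrite /Gmat !linearD !linearZ /= !trmx_mul !trmxK sQ sR sS !mulmxA.
by [].
Qed.

Lemma Gmat_q S z : 2^-1 * qform (Gmat S) z =
  cost Q Rw (zx z) (zu z) (row 0 (zr z))^T + gamma * (2^-1 * qform S (Mf A B S z)).
Proof.
rewrite /Gmat !qformDm qformZm -!qform_mul -(linmxP (@P1f_lin R n m N)) -(linmxP (@P2f_lin R n m N)) -(linmxP (Mf_lin A B S)).
rewrite /cost /P1f /P2f; ring.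
Qed.

Variables (x : nat -> 'cV[R]_n) (u : nat -> 'cV[R]_m) (r : nat -> 'cV[R]_n).

Lemma refs_shift j : refs_at N r j j.+1 = rshiftref (refs_at N r j j).
Proof.
apply/matrixP => i c; rewrite !mxE.
case: (ltnP i N) => hi.
  rewrite inordK; last by rewrite ltnS.
  have -> : (j.+1 + i <= j + N)%N by lia.
  have -> : (j + i.+1 <= j + N)%N by lia.
  by rewrite addSnnS.
have -> : (j.+1 + i <= j + N)%N = false by lia.
by [].
Qed.

Lemma r_row0 j : (row 0 (refs_at N r j j))^T = r j.
Proof.
apply/matrixP => b c; rewrite (ord1 c) !mxE addn0 leq_addr.
by [].
Qed.

Lemma zstar_Mf Ms S j : (j < Ms)%N ->
  (forall j, (j < Ms)%N -> x j.+1 = A *m x j + B *m u j) ->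
  zstar x r (gain S) j = Mf A B S (zsample N x u r j).
Proof.
move=> hj dyn.
by rewrite /zstar /Mf /zsample zx_zvec zu_zvec zr_zvec -refs_shift -dyn.
Qed.

Lemma ls_step Ms (w wT : 'cV[R]_(nL n m N)) :
  (Phi N Ms x u r)^T *m Phi N Ms x u r \in unitmx ->
  (forall j : 'I_Ms, cost Q Rw (x j) (u j) (r j) +
      gamma * (w^T *m phi (zstar x r (gain (Hof w)) j)) 0 0
      = (wT^T *m phi (zsample N x u r j)) 0 0) ->
  vi_step Ms Q Rw gamma x u r w = wT.
Proof.
move=> hu ht; rewrite /vi_step /=.
set Ph := Phi N Ms x u r.
set tg := \col_(j < Ms) _.
have -> : tg = Ph *m wT.
  apply/matrixP => j c; rewrite (ord1 c) [LHS]mxE ht !mxE; apply: eq_bigr => k _.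
  by rewrite !mxE mulrC.
by rewrite -mulmxA (mulmxA Ph^T) mulKmx.
Qed.

Lemma w_step Ms (w : 'cV[R]_(nL n m N)) :
  Q^T = Q -> Rw^T = Rw ->
  (forall j, (j < Ms)%N -> x j.+1 = A *m x j + B *m u j) ->
  (Phi N Ms x u r)^T *m Phi N Ms x u r \in unitmx ->
  vi_step Ms Q Rw gamma x u r w = vmap (Gmat (Hof w)).
Proof.
move=> sQ sR dyn hu; apply: ls_step => // j.
rewrite (rep _ (Gmat_sym sQ sR (Hof_sym w)) (Gmat_struct _)) Gmat_q rep_w.
by rewrite /zsample zx_zvec zu_zvec zr_zvec r_row0 (zstar_Mf _ (ltn_ord j) dyn).
Qed.

Lemma q_step Ms (w : 'cV[R]_(nL n m N)) z :
  Q^T = Q -> Rw^T = Rw ->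
  (forall j, (j < Ms)%N -> x j.+1 = A *m x j + B *m u j) ->
  (Phi N Ms x u r)^T *m Phi N Ms x u r \in unitmx ->
  2^-1 * qform (Hof (vi_step Ms Q Rw gamma x u r w)) z =
  cost Q Rw (zx z) (zu z) (row 0 (zr z))^T
     + gamma * (2^-1 * qform (Hof w) (Mf A B (Hof w) z)).
Proof.
move=> sQ sR dyn hu; rewrite -rep_w (w_step w sQ sR dyn hu).
by rewrite (rep _ (Gmat_sym sQ sR (Hof_sym w)) (Gmat_struct _)) Gmat_q.
Qed.

End P4.

Lemma bilE (R : realType) k (S : 'M[R]_k) (a b : 'cV[R]_k) :
  (a^T *m S *m b) 0 0 = \sum_p \sum_q a p 0 * S p q * b q 0.
Proof.
rewrite mxE exchange_big /=; apply: eq_bigr => q _.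
rewrite mxE big_distrl /=; apply: eq_bigr => p _; by rewrite mxE.
Qed.

Lemma zeroE (R : realType) k l (i : 'I_k) (j : 'I_l) : (0 : 'M[R]_(k, l)) i j = 0.
Proof. by rewrite mxE. Qed.

Lemma oppE (R : realType) k l (A : 'M[R]_(k, l)) i j : (- A) i j = - A i j.
Proof. by rewrite mxE. Qed.

Section P5.
Variables (R : realType) (n m N : nat).
Local Notation zd := (zdim n m N).
Local Notation yd := (ydim n N).

Lemma sumZ_u (F : 'I_zd -> R) : (forall b, F (ix m N b) = 0) ->
  (forall i j, F (ir m i j) = 0) -> \sum_p F p = \sum_a F (iu n N a).
Proof.
move=> h1 h2; rewrite sumZ big1 // add0r.
by rewrite [X in _ + X]big1 ?addr0 // => i _; rewrite big1.
Qed.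

Lemma B1 (S : 'M[R]_zd) (v : 'cV[R]_m) :
  qform S (zvec 0 v (0 : 'M[R]_(N.+1, n))) = qform (huu S) v.
Proof.
rewrite !qformE sumZ_u => [|b|i j]; last 2 first.
- by rewrite zvec_ix zeroE big1 // => q _; rewrite !mul0r.
- by rewrite zvec_ir zeroE big1 // => q _; rewrite !mul0r.
apply: eq_bigr => a _; rewrite sumZ_u => [|b|i j]; last 2 first.
- by rewrite zvec_ix zeroE mulr0.
- by rewrite zvec_ir zeroE mulr0.
by apply: eq_bigr => b _; rewrite !zvec_iu [in RHS]mxE.
Qed.

Lemma B2 (S : 'M[R]_zd) (v : 'cV[R]_m) x (rs : 'M[R]_(N.+1, n)) :
  (forall a j, S (iu n N a) (ir m ord0 j) = 0) ->
  ((zvec 0 v (0 : 'M[R]_(N.+1, n)))^T *m S *m zvec x 0 rs) 0 0 =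
  (v^T *m (huy S *m yvec x rs)) 0 0.
Proof.
move=> hS; rewrite bilE sumZ_u => [|b|i j]; last 2 first.
- by rewrite zvec_ix zeroE big1 // => q _; rewrite !mul0r.
- by rewrite zvec_ir zeroE big1 // => q _; rewrite !mul0r.
rewrite mxE; apply: eq_bigr => a _; rewrite zvec_iu !mxE.
rewrite (eq_bigr (fun q => v a 0 * (S (iu n N a) q * zvec x 0 rs q 0))); last by move=> q _; rewrite mulrA.
rewrite -big_distrr /=; congr (_ * _).
rewrite sumZ sumY; congr (_ + _).
  by apply: eq_bigr => b _; rewrite zvec_ix huy_l yvec_l.
rewrite big1 ?add0r; last by move=> a' _; rewrite zvec_iu mxE mulr0.
rewrite big_ord_recl big1 ?add0r; last by move=> j _; rewrite hS mul0r.
apply: eq_bigr => i _; apply: eq_bigr => j _.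
by rewrite zvec_ir huy_r yvec_r.
Qed.

Lemma zvec_split (x : 'cV[R]_n) (v : 'cV[R]_m) (rs : 'M[R]_(N.+1, n)) :
  zvec x v rs = zvec x 0 rs + zvec 0 v 0.
Proof.
have := zvecD 1 x 0 rs 0 v 0; rewrite !scale1r !addr0 add0r => <-.
by [].
Qed.

Lemma minL (S : 'M[R]_zd) x rs (v : 'cV[R]_m) :
  S^T = S -> structured S -> (forall v, 0 <= qform (huu S) v) ->
  (S != 0 -> huu S \in unitmx) ->
  qform S (zvec x (gain S *m yvec x rs) rs) <= qform S (zvec x v rs).
Proof.
move=> sS stS psd hunit.
case: (eqVneq S 0) => [->|nS]; first by rewrite !qform0m.
have hS : forall a j, S (iu n N a) (ir m ord0 j) = 0.
  by move=> a j; apply: stS; rewrite blk_iu blk_ir.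
have uU := hunit nS.
set U := huu S.
have sU : U^T = U.
  by apply/matrixP => a b; rewrite !mxE -[in LHS]sS mxE.
set h := huy S *m yvec x rs.
set us := - (invmx U *m h).
have gE : gain S *m yvec x rs = us.
  by rewrite /gain (negbTE nS) mulNmx -mulmxA.
rewrite gE.
have qE : forall w : 'cV[R]_m, qform S (zvec x w rs) =
    qform S (zvec x 0 rs) + 2 * (w^T *m h) 0 0 + qform U w.
  by move=> w; rewrite zvec_split qformDv // B2 // B1.
rewrite (qE us) (qE v).
have Uus : U *m us = - h by rewrite mulmxN mulmxA mulmxV // mul1mx.
have e1 : qform U us = - (us^T *m h) 0 0.
  by rewrite /qform -mulmxA Uus mulmxN oppE.
have e2 : ((- us)^T *m U *m v) 0 0 = (v^T *m h) 0 0.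
  rewrite linearN /= mulNmx mulNmx oppE (bil_sym _ _ sU) -mulmxA Uus mulmxN.
  by rewrite oppE opprK.
have hq := psd (v - us).
rewrite qformDv // e2 in hq.
have qn : qform U (- us) = qform U us.
  rewrite !qformE; apply: eq_bigr => p _; apply: eq_bigr => q _; rewrite !oppE; ring.
rewrite qn e1 in hq; rewrite e1; lra.
Qed.

End P5.

Section Ana.
Variable R : realType.

Lemma cvg_sum_seq (I : Type) (r : seq I) (F : I -> nat -> R) (G : I -> R) :
  (forall i, F i @ \oo --> G i) ->
  (fun t => \sum_(i <- r) F i t) @ \oo --> \sum_(i <- r) G i.
Proof.
move=> h; elim: r => [|i r IH].
  under eq_cvg do rewrite big_nil.
  rewrite big_nil; exact: cvg_cst.
under eq_cvg do rewrite big_cons.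
rewrite big_cons; exact: cvgD.
Qed.

Lemma cvg_prod_seq (I : Type) (r : seq I) (F : I -> nat -> R) (G : I -> R) :
  (forall i, F i @ \oo --> G i) ->
  (fun t => \prod_(i <- r) F i t) @ \oo --> \prod_(i <- r) G i.
Proof.
move=> h; elim: r => [|i r IH].
  under eq_cvg do rewrite big_nil.
  rewrite big_nil; exact: cvg_cst.
under eq_cvg do rewrite big_cons.
rewrite big_cons; exact: cvgM.
Qed.

Lemma cvg_mx k l (f : nat -> 'M[R]_(k, l)) (M : 'M[R]_(k, l)) :
  (forall i j, (fun t => f t i j) @ \oo --> M i j) -> f @ \oo --> M.
Proof.
move=> h A [P hP sPA].
have ev : \forall t \near \oo, forall i j, P i j (f t i j).
  apply: filter_forall => i; apply: filter_forall => j.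
  exact: (h i j _ (hP i j)).
apply: (filterS _ ev) => t ht; apply: sPA; exact: ht.
Qed.

Lemma det_cvg k (f : nat -> 'M[R]_k) (M : 'M[R]_k) :
  (forall i j, (fun t => f t i j) @ \oo --> M i j) ->
  (fun t => \det (f t)) @ \oo --> \det M.
Proof.
move=> h; rewrite /determinant; apply: cvg_sum_seq => s.
apply: cvgMl_tmp; apply: cvg_prod_seq => i; exact: h.
Qed.

Lemma invmx_cvg k (f : nat -> 'M[R]_k) (M : 'M[R]_k) :
  (forall t, f t \in unitmx) -> M \in unitmx ->
  (forall i j, (fun t => f t i j) @ \oo --> M i j) ->
  forall i j, (fun t => invmx (f t) i j) @ \oo --> invmx M i j.
Proof.
move=> hu hM h i j.
have E : (fun t => invmx (f t) i j) =
         (fun t => (\det (f t))^-1 * cofactor (f t) j i).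
  by apply/funext => t; rewrite /invmx hu !mxE.
have E' : invmx M i j = (\det M)^-1 * cofactor M j i by rewrite /invmx hM !mxE.
rewrite E E'; apply: cvgM.
  apply: cvgV; first by move: hM; rewrite unitmxE unitfE.
  exact: det_cvg.
rewrite /cofactor; apply: cvgMl_tmp; apply: det_cvg => a b.
have E2 : (fun t => row' j (col' i (f t)) a b) = (fun t => f t (lift j a) (lift i b)).
  by apply/funext => t; rewrite !mxE.
by rewrite E2 !mxE; exact: h.
Qed.

Lemma mulmx_cvg k l p (f : nat -> 'M[R]_(k, l)) (g : nat -> 'M[R]_(l, p)) (M1 : 'M[R]_(k, l)) (M2 : 'M[R]_(l, p)) :
  (forall i j, (fun t => f t i j) @ \oo --> M1 i j) ->
  (forall i j, (fun t => g t i j) @ \oo --> M2 i j) ->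
  forall i j, (fun t => (f t *m g t) i j) @ \oo --> (M1 *m M2) i j.
Proof.
move=> h1 h2 i j; under eq_cvg do rewrite !mxE.
rewrite !mxE; apply: cvg_sum_seq => b; exact: cvgM.
Qed.

End Ana.

Section P7.
Variable R : realType.

Lemma qpos k (M : 'M[R]_k) : posdef M -> forall v, 0 <= qform M v.
Proof.
move=> [_ pd] v; case: (eqVneq v 0) => [->|nv]; first by rewrite qform0v.
exact/ltW/pd.
Qed.

Lemma pd_unit k (U : 'M[R]_k) : (forall v, v != 0 -> 0 < qform U v) -> U \in unitmx.
Proof.
move=> pd; rewrite unitmxE unitfE; apply/negP => /det0P [v nv hv].
have nvT : v^T != 0 by apply: contra nv => /eqP h; rewrite -(trmxK v) h trmx0.
have := pd _ nvT; rewrite /qform trmxK hv mul0mx zeroE.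
by rewrite ltxx.
Qed.

Lemma inf_min (T : Type) (f : T -> R) t0 : (forall t, f t0 <= f t) -> inf (range f) = f t0.
Proof.
move=> hf; apply/eqP; rewrite eq_le; apply/andP; split.
  apply: (ge_inf (E := range f)); last by exists t0.
  by exists (f t0) => y [t _ <-]; exact: hf.
apply: lb_le_inf; first by exists (f t0), t0.
by move=> y [t _ <-]; exact: hf.
Qed.

Variables (n m N : nat).
Local Notation zd := (zdim n m N).

Lemma Hof0 : Hof (0 : 'cV[R]_(nL n m N)) = 0.
Proof. by apply/matrixP => p q; rewrite !mxE big1 // => k _; rewrite mxE. Qed.

Variables (A : 'M[R]_n) (B : 'M[R]_(n, m)) (Q : 'M[R]_n) (Rw : 'M[R]_m) (gamma : R).

Lemma cost_ge0 x u r : possemidef Q -> posdef Rw -> 0 <= cost Q Rw x u r.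
Proof.
move=> [_ psd] pd; rewrite /cost; apply: mulr_ge0; first by [].
by apply: addr_ge0; [exact: psd | exact: qpos].
Qed.

Lemma cost0 (v : 'cV[R]_m) : cost Q Rw 0 v (row 0 (0 : 'M[R]_(N.+1, n)))^T = 2^-1 * qform Rw v.
Proof.
have -> : row 0 (0 : 'M[R]_(N.+1, n)) = 0 by apply/matrixP => i j; rewrite !mxE.
by rewrite /cost trmx0 subr0 qform0v add0r.
Qed.

Lemma Qfin_ge_cost : possemidef Q -> posdef Rw -> 0 <= gamma ->
  forall K x0 u0 (rs : 'M[R]_(N.+1, n)),
  cost Q Rw x0 u0 (row 0 rs)^T <= Qfin A B Q Rw gamma K x0 u0 rs.
Proof.
move=> psd pd hg; elim => [|K IH] x0 u0 rs /=; first by [].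
rewrite lerDl; apply: mulr_ge0 => //.
apply: lb_le_inf; first by exists (Qfin A B Q Rw gamma K (A *m x0 + B *m u0) 0 (rshiftref rs)), 0.
move=> y [u' _ <-]; apply: le_trans (IH _ _ _); exact: cost_ge0.
Qed.

Variables (Ms : nat) (x : nat -> 'cV[R]_n) (u : nat -> 'cV[R]_m) (r : nat -> 'cV[R]_n).

Lemma Qfin_eq : possemidef Q -> posdef Rw -> 0 <= gamma ->
  (forall j, (j < Ms)%N -> x j.+1 = A *m x j + B *m u j) ->
  (Phi N Ms x u r)^T *m Phi N Ms x u r \in unitmx ->
  forall i x0 u0 (rs : 'M[R]_(N.+1, n)),
  Qfin A B Q Rw gamma i x0 u0 rs =
  2^-1 * qform (Hof (w_iter N Ms Q Rw gamma x u r i.+1)) (zvec x0 u0 rs).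
Proof.
move=> psd pd hg dyn hu.
have sQ := psd.1; have sR := pd.1.
elim => [|i IH] x0 u0 rs.
  rewrite [w_iter _ _ _ _ _ _ _ _ 1]/= (q_step (A:=A) (B:=B)) //.
  by rewrite Hof0 qform0m !mulr0 addr0 zx_zvec zu_zvec zr_zvec.
rewrite [w_iter _ _ _ _ _ _ _ _ i.+2]/= (q_step (A:=A) (B:=B)) //.
rewrite zx_zvec zu_zvec zr_zvec /=.
set S := Hof (w_iter N Ms Q Rw gamma x u r i.+1).
congr (_ + gamma * _).
have -> : (fun u' => Qfin A B Q Rw gamma i (A *m x0 + B *m u0) u' (rshiftref rs)) =
          (fun u' => 2^-1 * qform S (zvec (A *m x0 + B *m u0) u' (rshiftref rs))).
  by apply/funext => u'; rewrite IH.
have lb : forall v, qform Rw v <= qform (huu S) v.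
  move=> v; rewrite -B1.
  have := Qfin_ge_cost psd pd hg i 0 v 0; rewrite IH cost0; lra.
rewrite /Mf zx_zvec zu_zvec zr_zvec /=.
apply: inf_min => t; rewrite ler_pM2l ?invr_gt0 ?ltr0n //.
apply: minL.
- exact: Hof_sym.
- exact: Hof_struct.
- by move=> v; apply: le_trans (lb v); exact: qpos.
- move=> _; apply: pd_unit => v nv; apply: lt_le_trans (lb v).
  by apply: pd.2.
Qed.

End P7.

Unset Implicit Arguments. Set Strict Implicit.

Theorem theorem2 (R : realType) (n m N Ms : nat)
  (A : 'M[R]_n) (B : 'M[R]_(n, m)) (Q : 'M[R]_n) (Rw : 'M[R]_m) (gamma : R)
  (H : 'M[R]_(zdim n m N))
  (x : nat -> 'cV[R]_n) (u : nat -> 'cV[R]_m) (r : nat -> 'cV[R]_n) :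
  posdef Rw -> possemidef Q -> controllable A B ->
  0 <= gamma -> gamma < 1 ->
  (* H is the matrix of the reference-dependent Q-function Q_0 = lim_K ^K Q_0 *)
  H^T = H ->
  (forall (x0 : 'cV[R]_n) (u0 : 'cV[R]_m) (rs : 'M[R]_(N.+1, n)),
     (fun K => Qfin A B Q Rw gamma K x0 u0 rs) @ \oo -->
       (2^-1 * qform H (zvec x0 u0 rs) : R)) ->
  (* data generated by the system *)
  (forall j, (j < Ms)%N -> x j.+1 = A *m x j + B *m u j) ->
  (nL n m N <= Ms)%N ->
  \rank ((Phi N Ms x u r)^T *m Phi N Ms x u r) = nL n m N ->
  let w := w_iter N Ms Q Rw gamma x u r in
  [/\ (fun i => Hof (w i)) @ \oo --> H,
      (fun i => w i) @ \oo --> vmap H &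
      (fun i => gain (Hof (w i))) @ \oo --> gain H].
Proof.
move=> pd psd _ hg _ sH hlim dyn _ hrank w.
have hu : (Phi N Ms x u r)^T *m Phi N Ms x u r \in unitmx.
  by rewrite -row_free_unit /row_free hrank.
have QE := Qfin_eq psd pd hg dyn hu.
set S := fun i => Hof (w i).
have Hq : forall z, (fun K => qform (S K.+1) z) @ \oo --> qform H z.
  move=> z; have := hlim (zx z) (zu z) (zr z); rewrite zvecK.
  have -> : (fun K => Qfin A B Q Rw gamma K (zx z) (zu z) (zr z)) =
            (fun K => 2^-1 * qform (S K.+1) z).
    by apply/funext => K; rewrite QE zvecK.
  move=> h1; have h2 := cvgMl_tmp (a := 2) h1.
  have e : forall y : R, 2 * (2^-1 * y) = y by move=> y; lra.
  rewrite e in h2.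
  have E : (fun K => 2 * (2^-1 * qform (S K.+1) z)) = (fun K => qform (S K.+1) z).
    by apply/funext => K; rewrite e.
  by rewrite E in h2; apply: h2.
have HS : forall p q, (fun K => S K.+1 p q) @ \oo --> H p q.
  move=> p q.
  have -> : (fun K => S K.+1 p q) = (fun K => 2^-1 * (qform (S K.+1) (evc R p + evc R q)
      - qform (S K.+1) (evc R p) - qform (S K.+1) (evc R q))).
    by apply/funext => K; rewrite (polar _ _ (Hof_sym _)).
  rewrite (polar _ _ sH); apply: cvgMl_tmp; apply: cvgB; [apply: cvgB|]; exact: Hq.
have HS0 : forall p q, (fun K => S K p q) @ \oo --> H p q.
  by move=> p q; rewrite -(cvg_shiftS (fun K => S K p q)); exact: HS.
split.
- by apply: cvg_mx => p q; exact: HS0.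
- apply: cvg_mx => k c.
  have -> : (fun t => w t k c) = (fun t => S t (tnth (tpairs n m N) k).1 (tnth (tpairs n m N) k).2).
    by apply/funext => t; rewrite -{1}(vmap_Hof (w t)) mxE.
  rewrite mxE; exact: HS0.
case: (posnP m) => [m0|mpos].
  have E : forall X Y : 'M[R]_(m, ydim n N), X = Y.
    by move=> X Y; apply/matrixP => a; have := ltn_ord a; rewrite {2}m0.
  have -> : (fun i => gain (Hof (w i))) = (fun _ => gain H) by apply/funext => i; apply: E.
  exact: cvg_cst.
have lbS : forall K v, qform Rw v <= qform (huu (S K.+1)) v.
  move=> K v; have h := Qfin_ge_cost A B psd pd hg K 0 v (0 : 'M[R]_(N.+1, n)).
  rewrite cost0 QE in h; rewrite -B1; lra.
have lbH : forall v, qform Rw v <= qform (huu H) v.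
  move=> v; rewrite -B1.
  apply: (ler_cvg_to (cvg_cst (qform Rw v)) (Hq (zvec 0 v 0))).
  by apply: nearW => K; rewrite B1; exact: lbS.
have uH : huu H \in unitmx.
  by apply: pd_unit => v nv; apply: lt_le_trans (lbH v); exact: pd.2.
have uS : forall K, huu (S K.+1) \in unitmx.
  by move=> K; apply: pd_unit => v nv; apply: lt_le_trans (lbS K v); exact: pd.2.
have nz : forall X : 'M[R]_(zdim n m N), huu X \in unitmx -> X != 0.
  move=> X; apply: contraTneq => ->.
  have -> : huu (0 : 'M[R]_(zdim n m N)) = 0 by apply/matrixP => i j; rewrite !mxE.
  apply/negP => hu0; have := mulVmx hu0; rewrite mulmx0 => /matrixP /(_ (Ordinal mpos) (Ordinal mpos)).
  by rewrite !mxE eqxx => /eqP; rewrite eq_sym oner_eq0.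
have G : (fun K => gain (S K.+1)) @ \oo --> gain H.
  have -> : (fun K => gain (S K.+1)) = (fun K => - (invmx (huu (S K.+1)) *m huy (S K.+1))).
    by apply/funext => K; rewrite /gain (negbTE (nz _ (uS K))).
  rewrite /gain (negbTE (nz _ uH)).
  apply: cvg_mx => a c.
  have -> : (fun t => (- (invmx (huu (S t.+1)) *m huy (S t.+1))) a c) =
            (fun t => - ((invmx (huu (S t.+1)) *m huy (S t.+1)) a c)).
    by apply/funext => t; rewrite oppE.
  rewrite oppE; apply: cvgN.
  apply: (mulmx_cvg (f := fun t => invmx (huu (S t.+1))) (g := fun t => huy (S t.+1))).
    apply: (invmx_cvg (f := fun t => huu (S t.+1))) => // i j.
    have -> : (fun t => huu (S t.+1) i j) = (fun t => S t.+1 (iu n N i) (iu n N j)).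
      by apply/funext => t; rewrite mxE.
    rewrite mxE; exact: HS.
  move=> i j.
  have -> : (fun t => huy (S t.+1) i j) = (fun t =>
     match fintype.split j with
     | inl b => S t.+1 (iu n N i) (ix m N b)
     | inr c' => S t.+1 (iu n N i) (ir m (lift ord0 (idx_tail c').1) (idx_tail c').2)
     end).
    by apply/funext => t; rewrite /huy mxE.
  rewrite /huy mxE; case: (fintype.split j) => [b|c']; exact: HS.
by rewrite -(cvg_shiftS (fun i => gain (Hof (w i)))); exact: G.
Qed.
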